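(* For every integer $k\geq1$, the 2-group $\mathbb{S}ym(\mathsf D_{8k})$ is not split, i.e. the dihedral group $\mathsf D_{8k}$ is not permutationally split.
   Context: $\mathsf D_n=\langle r,s\mid r^n=s^2=e,\ sr=r^{-1}s\rangle$ is the dihedral group of order $2n$, regarded as a one-object groupoid. For a groupoid $\mathcal K$, $\mathbb{S}ym(\mathcal K)$ is the 2-group (monoidal groupoid with weakly invertible objects) whose objects are self-equivalences of $\mathcal K$, morphisms natural isomorphisms, tensor product composition. A 2-group is split if it is equivalent, via a monoidal functor admitting a pseudo-inverse up to monoidal natural isomorphism, to an elementary 2-group $\mathsf A[1]\rtimes\mathsf G[0]$ for some group $\mathsf G$ and left $\mathsf G$-module $\mathsf A$: the strict 2-group with objects the elements of $\mathsf G$, morphisms $(a,g):g\to g$ ($a\in\mathsf A$), composition $(a',g)\circ(a,g)=(a'+a,g)$, tensor $g\otimes g'=gg'$, $(a,g)\otimes(a',g')=(a+g\lhd a',gg')$, trivial associator and unitors. A group $\mathsf G$ is permutationally split if $\mathbb{S}ym(\mathsf G)$ is split. *)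

(* Defs.v *)
From HB Require Import structures.
From mathcomp Require Import all_boot all_order all_algebra all_fingroup all_solvable.
Set Implicit Arguments.
Unset Strict Implicit.
Unset Printing Implicit Defensive.

(* Strict monoidal groupoids, presented by raw data: a type of objects, a    *)
(* type of raw arrows, predicates selecting the genuine objects/arrows,      *)
(* source/target, identities, (vertical) composition [comp g f = g o f],     *)
(* tensor on objects and arrows, and the unit object.  Both 2-groups we need *)
(* (Sym(G) and the elementary A[1] x| G[0]) are strict monoidal (trivial     *)
(* associator and unitors), so this presentation suffices.                   *)
Record M2G := {
  ob : Type;
  ar : Type;
  isob : ob -> Prop;
  isar : ar -> Prop;
  src : ar -> ob;
  tgt : ar -> ob;
  idar : ob -> ar;
  comp : ar -> ar -> ar;
  tob : ob -> ob -> ob;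
  tar : ar -> ar -> ar;
  unit : ob
}.

Arguments isob {_}. Arguments isar {_}. Arguments src {_}. Arguments tgt {_}.
Arguments idar {_}. Arguments comp {_}. Arguments tob {_}. Arguments tar {_}.

Definition hom (C : M2G) (a : ar C) (x y : ob C) : Prop :=
  isar a /\ src a = x /\ tgt a = y.

Definition iso (C : M2G) (a : ar C) : Prop :=
  exists b, hom b (tgt a) (src a) /\ comp b a = idar (src a)
                                  /\ comp a b = idar (tgt a).

(* Sym(G) for a group G (the whole finGroupType gT) viewed as a one-object   *)
(* groupoid.  Self-equivalences of a one-object groupoid are exactly the     *)
(* group automorphisms; a natural isomorphism f => g is an element a with    *)
(* a * f(x) = g(x) * a for all x.  Raw arrows are triples (f, g, a).         *)
(* Tensor is composition: f (x) g = f o g, which as permutations is g * f    *)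
(* (mathcomp: (g * f) x = f (g x)).  The tensor of a : f => g and            *)
(* a' : f' => g' is the horizontal composite, with component g(a') * a.      *)
Section SymDef.
Variable gT : finGroupType.
Local Open Scope group_scope.

Definition sym_isob (f : {perm gT}) : Prop := f \in Aut [set: gT].
Definition sym_isar (p : {perm gT} * {perm gT} * gT) : Prop :=
  sym_isob p.1.1 /\ sym_isob p.1.2 /\ forall x : gT, p.2 * p.1.1 x = p.1.2 x * p.2.

Definition Sym : M2G := {|
  ob := {perm gT};
  ar := ({perm gT} * {perm gT} * gT)%type;
  isob := sym_isob;
  isar := sym_isar;
  src := fun p => p.1.1;
  tgt := fun p => p.1.2;
  idar := fun f => (f, f, 1);
  comp := fun q p => (p.1.1, q.1.2, q.2 * p.2);
  tob := fun f g => g * f;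
  tar := fun p q => (q.1.1 * p.1.1, q.1.2 * p.1.2, p.1.2 q.2 * p.2);
  unit := 1
|}.
End SymDef.

Record grp := {
  gcar :> Type;
  gmul : gcar -> gcar -> gcar;
  gone : gcar;
  ginv : gcar -> gcar;
  gmulA : forall x y z, gmul x (gmul y z) = gmul (gmul x y) z;
  gmul1x : forall x, gmul gone x = x;
  gmulx1 : forall x, gmul x gone = x;
  gmulVx : forall x, gmul (ginv x) x = gone;
  gmulxV : forall x, gmul x (ginv x) = gone
}.

Definition is_left_module (G : grp) (A : zmodType) (act : G -> A -> A) : Prop :=
  (forall g (a b : A), act g (a + b)%R = (act g a + act g b)%R) /\
  (forall a, act (@gone G) a = a) /\
  (forall g h a, act (gmul g h) a = act g (act h a)).

(* The elementary 2-group A[1] x| G[0]: objects g, arrows (a, g) : g -> g,  *)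
Definition elem (G : grp) (A : zmodType) (act : G -> A -> A) : M2G := {|
  ob := gcar G;
  ar := (A * gcar G)%type;
  isob := fun _ => True;
  isar := fun _ => True;
  src := fun p => p.2;
  tgt := fun p => p.2;
  idar := fun g => (0%R, g);
  comp := fun q p => ((q.1 + p.1)%R, p.2);
  tob := @gmul G;
  tar := fun p q => ((p.1 + act p.2 q.1)%R, @gmul G p.2 q.2);
  unit := @gone G
|}.

Record MF (C D : M2G) := {
  F0 : ob C -> ob D;
  F1 : ar C -> ar D;
  phi : ob C -> ob C -> ar D;   (* phi x y : F x (x) F y -> F (x (x) y) *)
  phi0 : ar D                   (* phi0 : I -> F I *)
}.
Arguments F0 {_ _}. Arguments F1 {_ _}. Arguments phi {_ _}. Arguments phi0 {_ _}.

Definition is_monfun (C D : M2G) (F : MF C D) : Prop :=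
  (forall x, isob x -> isob (F0 F x)) /\
  (forall a x y, isob x -> isob y -> hom a x y -> hom (F1 F a) (F0 F x) (F0 F y)) /\
  (forall x, isob x -> F1 F (idar x) = idar (F0 F x)) /\
  (forall a b x y z, isob x -> isob y -> isob z -> hom a x y -> hom b y z ->
      F1 F (comp b a) = comp (F1 F b) (F1 F a)) /\
  (forall x y, isob x -> isob y ->
      hom (phi F x y) (tob (F0 F x) (F0 F y)) (F0 F (tob x y)) /\ iso (phi F x y)) /\
  (hom (phi0 F) (unit D) (F0 F (unit C)) /\ iso (phi0 F)) /\
  (forall a b x x' y y', isob x -> isob x' -> isob y -> isob y' ->
      hom a x x' -> hom b y y' ->
      comp (phi F x' y') (tar (F1 F a) (F1 F b)) = comp (F1 F (tar a b)) (phi F x y)) /\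
  (* associativity coherence (associators are identities) *)
  (forall x y z, isob x -> isob y -> isob z ->
      comp (phi F (tob x y) z) (tar (phi F x y) (idar (F0 F z)))
      = comp (phi F x (tob y z)) (tar (idar (F0 F x)) (phi F y z))) /\
  (* unit coherences (unitors are identities) *)
  (forall x, isob x ->
      comp (phi F (unit C) x) (tar (phi0 F) (idar (F0 F x))) = idar (F0 F x)) /\
  (forall x, isob x ->
      comp (phi F x (unit C)) (tar (idar (F0 F x)) (phi0 F)) = idar (F0 F x)).

Definition mf_comp (C D E : M2G) (G : MF D E) (F : MF C D) : MF C E := {|
  F0 := fun x => F0 G (F0 F x);
  F1 := fun a => F1 G (F1 F a);
  phi := fun x y => comp (F1 G (phi F x y)) (phi G (F0 F x) (F0 F y));
  phi0 := comp (F1 G (phi0 F)) (phi0 G)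
|}.

Definition mf_id (C : M2G) : MF C C := {|
  F0 := id; F1 := id;
  phi := fun x y => idar (tob x y);
  phi0 := idar (unit C)
|}.

Definition is_monnatiso (C D : M2G) (F G : MF C D) (theta : ob C -> ar D) : Prop :=
  (forall x, isob x -> hom (theta x) (F0 F x) (F0 G x) /\ iso (theta x)) /\
  (forall a x y, isob x -> isob y -> hom a x y ->
      comp (theta y) (F1 F a) = comp (F1 G a) (theta x)) /\
  (forall x y, isob x -> isob y ->
      comp (theta (tob x y)) (phi F x y) = comp (phi G x y) (tar (theta x) (theta y))) /\
  comp (theta (unit C)) (phi0 F) = phi0 G.

Definition mon_equiv (C D : M2G) : Prop :=
  exists (F : MF C D) (K : MF D C),
    is_monfun F /\ is_monfun K /\
    (exists theta, is_monnatiso (mf_comp K F) (mf_id C) theta) /\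
    (exists theta', is_monnatiso (mf_comp F K) (mf_id D) theta').

Definition split2 (C : M2G) : Prop :=
  exists (G : grp) (A : zmodType) (act : G -> A -> A),
    is_left_module act /\ mon_equiv C (elem act).

Definition permutationally_split (gT : finGroupType) : Prop := split2 (Sym gT).

(* Main.v *)
Require Import Defs.
From HB Require Import structures.
From mathcomp Require Import all_boot all_order all_algebra all_fingroup all_solvable.
From mathcomp Require Import zify.
Set Implicit Arguments. Unset Strict Implicit. Unset Printing Implicit Defensive.

Module Aux.
Local Open Scope group_scope.

Lemma aut_mul (gT : finGroupType) (f : {perm gT}) (u v : gT) :
  f \in Aut [set: gT] -> f (u * v) = f u * f v.
Proof. by move=> Af; rewrite -(autmE Af) morphM //= ?inE. Qed.

Lemma aut_inv (gT : finGroupType) (f : {perm gT}) (u : gT) :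
  f \in Aut [set: gT] -> f u^-1 = (f u)^-1.
Proof. by move=> Af; rewrite -(autmE Af) morphV //= ?inE. Qed.

Lemma aut_X (gT : finGroupType) (f : {perm gT}) (u : gT) n :
  f \in Aut [set: gT] -> f (u ^+ n) = (f u) ^+ n.
Proof. by move=> Af; rewrite -(autmE Af) morphX //= ?inE. Qed.

Section Dih.
Variables (gT : finGroupType) (x y : gT) (k : nat).
Hypotheses (hk : 0 < k) (ox : #[x] = (8 * k)%N) (oy : #[y] = 2) (xy : x ^ y = x^-1)
  (defG : <[x]> ><| <[y]> = [set: gT]).

Let z := x ^+ (4 * k)%N.

Lemma yy : y * y = 1.
Proof. by rewrite -expg2 -oy expg_order. Qed.

Lemma yV : y^-1 = y.
Proof. by apply: mulg1_eq; rewrite yy. Qed.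

Lemma cC a b : a \in <[x]> -> b \in <[x]> -> a * b = b * a.
Proof.
by case/cycleP=> i -> /cycleP[j ->]; apply: commuteX2.
Qed.

Lemma yC a : a \in <[x]> -> y * a = a^-1 * y.
Proof.
case/cycleP=> i ->.
have : (x ^+ i) ^ y = (x ^+ i)^-1 by rewrite conjXg xy expVgn.
rewrite conjgE yV => <-; by rewrite !mulgA -(mulgA _ y) yy mulg1.
Qed.

Lemma zx : z \in <[x]>. Proof. exact: mem_cycle. Qed.

Lemma zz : z * z = 1.
Proof. by rewrite /z -expgD addnn -mul2n mulnA -ox expg_order. Qed.

Lemma zV : z^-1 = z.
Proof. by apply: mulg1_eq; rewrite zz. Qed.

Lemma zy : y * z = z * y.
Proof. by rewrite yC ?zV // zx. Qed.

Lemma z1 : z != 1.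
Proof.
apply/eqP=> /eqP; rewrite /z -order_dvdn ox => /dvdn_leq; lia.
Qed.

Lemma xx1 : x * x != 1.
Proof.
apply/eqP=> /eqP; rewrite -expg2 -order_dvdn ox => /dvdn_leq; lia.
Qed.

Lemma gen u : exists2 a, a \in <[x]> & (u = a \/ u = a * y).
Proof.
case/sdprodP: defG => _ dG _ _.
have : u \in [set: gT] by rewrite inE.
rewrite -dG => /mulsgP[a b Ha /cycleP[j ->] ->].
exists a => //.
rewrite -expg_mod_order oy.
have : j %% 2 < 2 by rewrite ltn_mod.
case: (j %% 2) => [|[|//]] _; [left; by rewrite mulg1 | right; by rewrite expg1].
Qed.

Lemma par a : a \in <[x]> -> exists2 b, b \in <[x]> & (a = b * b \/ a = x * b * b).
Proof.
case/cycleP=> i ->; exists (x ^+ i./2); first exact: mem_cycle.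
have E : x ^+ i = x ^+ odd i * (x ^+ i./2 * x ^+ i./2).
  by rewrite -expg2 -expgM -expgD muln2 odd_double_half.
rewrite E; case: (odd i); [right | left]; by rewrite ?expg1 ?expg0 ?mulgA ?mul1g.
Qed.

Lemma L b : b \in <[x]> -> (x * b * b) * (x * b * b) != z.
Proof.
case/cycleP=> i ->; rewrite !mulgA -expgS -expgD -expgSr -!expgD /z.
rewrite eq_expg_mod_order ox; apply/negP => /eqP H.
have : (((i.+1 + i).+1 + i + i) %% (8 * k) %% 4 = (4 * k) %% (8 * k) %% 4)%N by rewrite H.
rewrite !modn_dvdm ?(dvdn_mulr k (isT : 4 %| 8)) //.
  by lia.

Qed.

Lemma xz_comm : commute x z.
Proof. exact/commuteX/commute_refl. Qed.

Lemma z4 : z ^+ (4 * k) = 1.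
Proof.
by rewrite (_ : (4 * k = 2 * (2 * k))%N) ?expgM ?expg2 ?zz ?mulg1 ?expg1n //; lia.
Qed.

Lemma pc N : x ^+ N = 1 -> 4 %| N.
Proof.
move/eqP; rewrite -order_dvdn ox; apply: dvdn_trans.
by rewrite (dvdn_mulr k (isT : 4 %| 8)).
Qed.

Lemma rho_ex : exists2 rho : {perm gT}, rho \in Aut [set: gT] & rho x = x * z /\ rho y = x * y.
Proof.
have dH : #[x * z] %| #[x].
  rewrite order_dvdn expgMn; last exact: xz_comm.
  by rewrite /z expgAC !expg_order expg1n mulg1.
have dK : #[x * y] %| #[y].
  rewrite order_dvdn oy expg2 -mulgA (mulgA y) yC ?cycle_id // -!mulgA mulKVg yy.
  by [].
pose fH := eltm_morphism dH.
pose fK := eltm_morphism dK.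
have actf : {in <[x]> & <[y]>, morph_act 'J 'J fH fK}.
  have hxzy : (x * z) ^ (x * y) = (x * z)^-1.
    rewrite conjgE invMg yV !mulgA mulgKV zy -(mulgA z) yC ?cycle_id //.
    by rewrite -!mulgA yy mulg1 invMg zV.
  move=> a b /cycleP[i ->] /cycleP[j ->].
  rewrite -(expg_mod_order y j) oy.
  have : j %% 2 < 2 by rewrite ltn_mod.
  case: (j %% 2) => [|[|//]] _.
    by rewrite expg0 /= conjg1 morph1 conjg1.
  rewrite expg1 /= conjXg xy expVgn morphV ?mem_cycle //= !eltmE eltm_id.
  by rewrite conjXg hxzy expVgn.
pose f : {morphism [set: gT] >-> gT} := sdprodm_morphism defG actf.
have fx : f x = x * z by rewrite /f /= sdprodmEl ?cycle_id //= eltm_id.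
have fy : f y = x * y by rewrite /f /= sdprodmEr ?cycle_id //= eltm_id.
have fz : f z = z.
  rewrite {1}/z morphX ?inE // fx expgMn; last exact: xz_comm.
  have -> : z ^+ (4 * k) = 1.
    rewrite (_ : (4 * k = 2 * (2 * k))%N) ?expgM ?expg2 ?zz ?mulg1 ?expg1n //; lia.
  by rewrite mulg1.
have imf : f @* [set: gT] = [set: gT].
  apply/eqP; rewrite eqEsubset subsetT /=.
  have dG : <[x]> * <[y]> = [set: gT] by case/sdprodP: defG.
  rewrite -{1}dG.
  have Hx : x \in f @* [set: gT].
    have -> : x = f x * f z by rewrite fx fz -mulgA zz mulg1.
    by rewrite groupM ?mem_morphim ?inE.
  apply: mul_subG; rewrite cycle_subG //.
  suff : x^-1 * f y \in f @* [set: gT] by rewrite fy mulKg.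
  by rewrite groupM ?groupV ?mem_morphim ?inE.
have injf : 'injm f by rewrite -card_im_injm imf.
exists (aut injf imf); first exact: Aut_aut.
by rewrite !autE ?inE.
Qed.

Lemma cx a u : a \in <[x]> -> u \in <[x]> -> u ^ a = u.
Proof. by move=> Ha Hu; rewrite conjgE (cC Hu Ha) mulKg. Qed.

Lemma cy u : u \in <[x]> -> u ^ y = u^-1.
Proof. by move=> Hu; rewrite conjgE yV mulgA yC // -mulgA yy mulg1. Qed.

Lemma ycx a : a \in <[x]> -> y ^ a = a^-1 * a^-1 * y.
Proof. by move=> Ha; rewrite conjgE yC // mulgA. Qed.

Lemma yyc : y ^ y = y.
Proof. by rewrite conjgE mulKg. Qed.

Lemma rho2 (rho : {perm gT}) : rho \in Aut [set: gT] ->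
  rho x = x * z -> rho y = x * y ->
  exists r0, forall u, rho (rho u) = r0^-1 * u * r0.
Proof.
move=> Ar rx ry.
have rM u v : rho (u * v) = rho u * rho v by exact: aut_mul.
have rX u n : rho (u ^+ n) = (rho u) ^+ n by exact: aut_X.
have rz : rho z = z.
  by rewrite {1}/z rX rx expgMn ?z4 ?mulg1 //; exact: xz_comm.
have rrx : rho (rho x) = x by rewrite rx rM rz rx -mulgA zz mulg1.
exists (x ^+ (2 * k).+1)^-1 => u.
rewrite -mulgA -conjgE.
have [a Ha [-> | ->]] := gen u.
  case/cycleP: Ha => i ->; by rewrite !rX rrx cx ?groupV ?mem_cycle.
rewrite !rM conjMg; case/cycleP: Ha => i ->.
rewrite !rX rrx cx ?groupV ?mem_cycle // ycx ?groupV ?mem_cycle // invgK.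
rewrite ry rM rx ry !mulgA; congr (_ * _).
rewrite /z -!mulgA; congr (_ * _).
rewrite -[x in x * (_ * x)]expg1 -!expgD; congr (_ ^+ _); lia.
Qed.

Lemma no_ext (rho beta : {perm gT}) (t h0 : gT) :
  rho x = x * z -> rho y = x * y -> beta \in Aut [set: gT] ->
  (forall u, t * beta u = rho u * t) ->
  (forall u, beta (beta u) = h0^-1 * u * h0) -> beta h0 = h0 -> False.
Proof.
move=> rx ry Ab Ht HB HC.
have Hb u : beta u = (rho u) ^ t by rewrite conjgE -Ht mulKg.
have bM u v : beta (u * v) = beta u * beta v by exact: aut_mul.
have bV u : beta u^-1 = (beta u)^-1 by exact: aut_inv.
have bX u n : beta (u ^+ n) = (beta u) ^+ n by exact: aut_X.
have Xx := cycle_id x.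
have Hxz : x * z \in <[x]> by rewrite groupM ?zx.
have [b Hbx [Hbx1 Hby]] : exists2 b, b \in <[x]> &
    ((beta x = x * z \/ beta x = x^-1 * z) /\ beta y = x * b * b * y).
  have [a Ha [Et | Et]] := gen t.
    exists a^-1; first by rewrite groupV.
    split; first by left; rewrite Hb rx Et (cx Ha Hxz).
    by rewrite Hb ry Et conjMg (cx Ha Xx) (ycx Ha) !mulgA.
  exists (x^-1 * a); first by rewrite groupM ?groupV.
  split.
    right; rewrite Hb rx Et conjgM (cx Ha Hxz) (cy Hxz) invMg zV; apply: cC; by rewrite ?groupV ?zx.
  rewrite Hb ry Et (conjgM (x * y) a y) (conjMg x y a) (cx Ha Xx) (ycx Ha) (conjMg x) (conjMg _ y y) yyc (cy Xx) (conjMg a^-1) !(cy (groupVr Ha)).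
  by rewrite !invgK mulKVg !mulgA (cC Ha) ?groupV.
have bz : beta z = z.
  rewrite {1}/z bX; case: Hbx1 => ->.
    by rewrite expgMn ?z4 ?mulg1 //; exact: xz_comm.
  rewrite expgMn ?z4 ?mulg1 ?expVgn ?zV //; apply: cC; by rewrite ?groupV ?zx.
have bbx : beta (beta x) = x.
  case: Hbx1 => E; rewrite E bM bz ?bV E.
    by rewrite -mulgA zz mulg1.
  by rewrite invMg zV invgK -mulgA (cC Xx zx) mulgA zz mul1g.
have h0x : h0 \in <[x]>.
  have [a Ha [Eh | Eh]] := gen h0; first by rewrite Eh.
  exfalso; have := HB x; rewrite bbx -mulgA -conjgE Eh (conjgM x a y) (cx Ha Xx).
  rewrite (cy Xx) => E; move/eqP: xx1; apply; by rewrite {1}E mulVg.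
have [c Hc Hh] := par h0x.
have E := HB y.
rewrite -mulgA -conjgE (ycx h0x) Hby -(mulgA x b b) !bM in E.
rewrite Hby !mulgA in E; move/mulIg: E => E.
case/cycleP: Hbx => i Eb.
case/cycleP: Hc => j Ec.
case: Hbx1 => Ex.
  have bsq e : beta (x ^+ e * x ^+ e) = x ^+ e * x ^+ e.
    rewrite -expgD bX Ex expgMn; last exact: xz_comm.
    by rewrite addnn -mul2n (expgM z) expg2 zz expg1n mulg1.
  rewrite -(mulgA (beta x)) -bM Eb bsq Ex in E.
  case: Hh => Eh.
    have E2 : x * z * (x ^+ i * x ^+ i) * x * x ^+ i * x ^+ i * h0 * h0 = 1.
      by rewrite E mulgKV mulVg.
    move: E2; rewrite Eh Ec /z -[x]expg1 -!expgM !mul1n !mulgA -!expgD => /pc.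
    lia.
  move: HC; rewrite Eh Ec -(mulgA x) bM bsq Ex -(mulgA x z) => /mulgI.
  move/(congr1 (fun u => u * (x ^+ j * x ^+ j)^-1)); rewrite mulgK mulgV => Ez.
  by move/eqP: z1.
have bsq e : beta (x ^+ e * x ^+ e) = (x ^+ e)^-1 * (x ^+ e)^-1.
  rewrite -invMg -expgD bX Ex expgMn; last by apply: cC; rewrite ?groupV ?zx.
  by rewrite addnn -mul2n (expgM z) expg2 zz expg1n mulg1 expVgn.
rewrite -(mulgA (beta x)) -bM Eb bsq Ex -invMg in E.
have F : x^-1 * z * (x ^+ i * x ^+ i)^-1 * x * x ^+ i * x ^+ i = z.
  rewrite -(mulgA _ (x ^+ i)) -(mulgA _ x) -(mulgA (x^-1 * z)) -conjgE.
  by rewrite cx ?groupM ?mem_cycle // -mulgA (cC zx Xx) mulKg.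
rewrite F in E.
case: Hh => Eh.
  move: HC; rewrite Eh Ec bsq -invMg => HC.
  rewrite Eh Ec -{1}HC mulVg in E.
  by move/eqP: z1.
have E2 : z * h0 * h0 = 1 by rewrite E mulgKV mulVg.
move: E2; rewrite Eh Ec /z -[x]expg1 -!expgM !mul1n !mulgA -!expgD => /pc.
lia.
Qed.

End Dih.

Lemma split_obstruction (gT : finGroupType) (rho : {perm gT}) :
  rho \in Aut [set: gT] ->
  (exists r0 : gT, forall u, rho (rho u) = r0^-1 * u * r0) ->
  permutationally_split gT ->
  exists (beta : {perm gT}) (t h0 : gT), beta \in Aut [set: gT] /\
    (forall u, t * beta u = rho u * t) /\
    (forall u, beta (beta u) = h0^-1 * u * h0) /\ beta h0 = h0.
Proof.
move=> Arho [r0 Hr0] [G [A [act [_ [F [K [HF [HK [[theta Hth] [theta' Hth']]]]]]]]]].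
set g := Defs.F0 F rho.
set beta := Defs.F0 K g.
have Hob: forall x, sym_isob (Defs.F0 K x).
  move=> x; exact: (proj1 HK x I).
have Abeta : beta \in Aut [set: gT] by apply: Hob.
have [Hthr _] := Hth.
have [[isT [sT tT]] _] := Hthr rho Arho.
set t := (theta rho).2.
have Ht : forall u, t * beta u = rho u * t.
  move=> u; case: isT => _ [_ H]; move: (H u); simpl in sT, tT; rewrite sT tT; done.
exists beta.
case: HK => _ [_ [_ [_ [Hphi [[Hphi0 _] [_ [Hass [Hu1 Hu2]]]]]]]].
have FK : forall x, Defs.F0 F (Defs.F0 K x) = x.
  move=> x; case: Hth' => [H _]; case: (H x I) => [[_ [s1 t1]] _].
  simpl in s1, t1; by rewrite -s1 t1.
have [[Pisar [Psrc Ptgt]] _] := Hphi g g I I.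
have [Q0isar [Q0src Q0tgt]] := Hphi0.
set c := (phi K g g).2.
set d := (phi0 K).2.
set iota := Defs.F0 K (gmul g g).
have Hc : forall u, c * beta (beta u) = iota u * c.
  move=> u; case: Pisar => _ [_ H]; move: (H u).
  simpl in Psrc, Ptgt; by rewrite Psrc Ptgt /= permM.
have Hd : forall u, d * u = Defs.F0 K (@gone G) u * d.
  move=> u; case: Q0isar => _ [_ H]; move: (H u).
  simpl in Q0src, Q0tgt; by rewrite Q0src Q0tgt /= perm1.
have Hb : forall u, beta u = t^-1 * rho u * t.
  by move=> u; rewrite -mulgA -Ht mulKg.
have [s Hbb] : exists s, forall u, beta (beta u) = s^-1 * u * s.
  exists (r0 * rho t * t) => u.
  by rewrite Hb Hb !aut_mul // !aut_inv // Hr0 !invMg !mulgA.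
have Hio : forall u, iota u = c * beta (beta u) * c^-1.
  by move=> u; rewrite Hc mulgK.
have Hgg : gmul g g = @gone G.
  case: HF => _ [HF1 _].
  set e := d * s * c^-1.
  have Ha : @Defs.hom (Defs.Sym gT) (iota, Defs.F0 K (@gone G), e) iota (Defs.F0 K (@gone G)).
    split; last by [].
    split; first exact: Hob.
    split; first exact: Hob.
    move=> u /=; rewrite Hio Hbb /e !mulgA -Hd.
    by rewrite mulgKV mulgK.
  have [_ [s1 t1]] := HF1 _ _ _ (Hob _) (Hob _) Ha.
  simpl in s1, t1.
  by rewrite -(FK (gmul g g)) -(FK (@gone G)) -s1 -t1.
have Io : forall u, Defs.F0 K (@gone G) u = d * u * d^-1.
  by move=> u; rewrite Hd mulgK.
have Io1 : Defs.F0 K (@gone G) 1 = 1 by rewrite Io mulg1 mulgV.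
have E1 := f_equal snd (Hu1 g I).
have E2 := f_equal snd (Hu2 g I).
have E3 := f_equal snd (Hass g g g I I I).
simpl in E1, E2, E3.
simpl in Q0tgt, Ptgt.
rewrite Q0tgt /= Io1 mul1g in E1.
rewrite mulg1 in E2.
rewrite Ptgt /= Hgg Io1 mul1g mulg1 in E3.
rewrite -/c -/beta in E3.
rewrite -/d in E1; rewrite -/d -/beta in E2.
have U2 : (phi K (gone G) g).2 = d^-1 by rewrite -(mulgK d (phi K (gone G) g).2) E1 mul1g.
have V2 : (phi K g (gone G)).2 = (beta d)^-1.
  by rewrite -(mulgK (beta d) (phi K g (gone G)).2) E2 mul1g.
rewrite U2 V2 in E3.
exists t, (d^-1 * c); split; first exact: Abeta.
split; first exact: Ht.
split.
  move=> u; apply: (mulgI c); rewrite Hc /iota Hgg Io invMg invgK !mulgA.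
  by rewrite mulgV mul1g.
by rewrite aut_mul // aut_inv // E3.
Qed.


End Aux.

(* mathcomp's 'D_m is the dihedral group of ORDER m; the paper's D_n has
   order 2n, so the paper's D_{8k} is 'D_(2 * (8 * k)). *)
Theorem proposition4p24 (k : nat) (hk : 1 <= k) :
  ~ permutationally_split ('D_(2 * (8 * k))).
Proof.
rewrite mul2n.
have q_gt1 : (1 < 8 * k)%N by lia.
have iso := Grp_dihedral q_gt1.
have /(isoGrpP _ iso) [_ homH] := isog_refl 'D_((8 * k).*2).
have oG := card_dihedral q_gt1.
move: homH oG; set gT := ('D_((8 * k).*2))%type => homH oG.
case/existsP: homH => -[x y] /eqP [defG xq y2 xy].
have ny : (<[y]> \subset 'N(<[x]>))%g.
  by rewrite cycle_subG inE -cycleJ xy cycleV subxx.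
have dG : (<[x]> * <[y]> = [set: gT])%g by rewrite -norm_joinEr.
have hc := mul_cardG <[x]>%G <[y]>%G.
rewrite dG oG -!orderE in hc.
have dx : ((#[x])%g %| 8 * k)%N by rewrite order_dvdn xq.
have dy : ((#[y])%g %| 2)%N by rewrite order_dvdn y2.
have lx := dvdn_leq (ltnW q_gt1) dx.
have ly := dvdn_leq (isT : (0 < 2)%N) dy.
have px := order_gt0 x.
have py := order_gt0 y.
have lxy : ((#[x])%g * (#[y])%g <= 8 * k * 2)%N by apply: leq_mul.
rewrite -mul2n in hc.
move: hc; set c := #|_ :&: _| => hc.
have pc : (0 < c)%N by apply: (cardG_gt0 (<[x]> :&: <[y]>)%G).
have oy : (#[y])%g = 2.
  have : (#[y])%g = 1 \/ (#[y])%g = 2 by lia.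
  case=> // hy1; exfalso; rewrite hy1 muln1 in hc; nia.
have ox : (#[x])%g = (8 * k)%N by rewrite oy in hc lxy; nia.
have TI : (<[x]> :&: <[y]> = 1)%g.
  apply/eqP; rewrite trivg_card_le1 -/c; rewrite ox oy in hc; nia.
have defG' : (<[x]> ><| <[y]> = [set: gT])%g by rewrite sdprodE.
have [rho Ar [rx ry]] := Aux.rho_ex hk ox oy xy defG'.
have [r0 Hr0] := Aux.rho2 hk ox oy xy defG' Ar rx ry.
move=> Hs.
have [beta [t [h0 [Ab [Ht [HB HC]]]]]] :=
  Aux.split_obstruction Ar (ex_intro _ r0 Hr0) Hs.
exact: (Aux.no_ext hk ox oy xy defG' rx ry Ab Ht HB HC).
Qed.
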